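(* Let $(\mathfrak{g},[\cdot,\ldots,\cdot],\varepsilon,\alpha)$ be an $n$-Hom-Lie color algebra. Then $\mathfrak{g}$ admits a product structure if and only if $\mathfrak{g}$ admits a decomposition $\mathfrak{g}=\mathfrak{g}_+\oplus\mathfrak{g}_-$ (so that $\mathfrak{g}_\gamma=(\mathfrak{g}_+\cap\mathfrak{g}_\gamma)\oplus(\mathfrak{g}_-\cap\mathfrak{g}_\gamma)$ for every $\gamma\in\Gamma$) into two nonzero $\Gamma$-graded subalgebras $\mathfrak{g}_+$ and $\mathfrak{g}_-$. Moreover, if $\mathcal{P}$ is a product structure, the eigenspaces $\mathfrak{g}_+=\{x:\mathcal{P}x=x\}$ and $\mathfrak{g}_-=\{x:\mathcal{P}x=-x\}$ give such a decomposition.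
   Context: $\mathbb{K}$ is a field of characteristic zero and $\Gamma$ an abelian group. A bicharacter is a map $\varepsilon:\Gamma\times\Gamma\to\mathbb{K}\setminus\{0\}$ with $\varepsilon(a,b)\varepsilon(b,a)=1$, $\varepsilon(a,b+c)=\varepsilon(a,b)\varepsilon(a,c)$, $\varepsilon(a+b,c)=\varepsilon(a,c)\varepsilon(b,c)$. For homogeneous $x,y$, $\varepsilon(x,y)=\varepsilon(|x|,|y|)$ and $\varepsilon(x,y_1+\dots+y_k)=\varepsilon(|x|,|y_1|+\dots+|y_k|)$ ($=1$ for an empty sum). An $n$-Hom-Lie color algebra $(\mathfrak{g},[\cdot,\ldots,\cdot],\varepsilon,\alpha)$ is a $\Gamma$-graded vector space with an $n$-linear bracket of degree zero, a bicharacter $\varepsilon$ and a degree-zero linear map $\alpha$ such that for homogeneous elements: (i) $[x_1,\ldots,x_i,x_{i+1},\ldots,x_n]=-\varepsilon(x_i,x_{i+1})[x_1,\ldots,x_{i+1},x_i,\ldots,x_n]$; (ii) $[\alpha(x_1),\ldots,\alpha(x_{n-1}),[y_1,\ldots,y_n]]=\sum_{i=1}^n\varepsilon(x_1+\dots+x_{n-1},y_1+\dots+y_{i-1})[\alpha(y_1),\ldots,\alpha(y_{i-1}),[x_1,\ldots,x_{n-1},y_i],\alpha(y_{i+1}),\ldots,\alpha(y_n)]$. A $\Gamma$-graded subalgebra is a graded subspace $\mathfrak{h}=\bigoplus_\gamma(\mathfrak{h}\cap\mathfrak{g}_\gamma)$ with $\alpha(\mathfrak{h})\subseteq\mathfrak{h}$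 and $[\mathfrak{h},\ldots,\mathfrak{h}]\subseteq\mathfrak{h}$. For a degree-zero linear $\mathcal{N}$ set $[\cdot]^0_{\mathcal{N}}=[\cdot]$ and $[x_1,\ldots,x_n]^j_{\mathcal{N}}=\sum_{i_1<\dots<i_j}[x_1,\ldots,\mathcal{N}x_{i_1},\ldots,\mathcal{N}x_{i_j},\ldots,x_n]-\mathcal{N}([x_1,\ldots,x_n]^{j-1}_{\mathcal{N}})$ for $1\le j\le n-1$ ($\mathcal{N}$ applied exactly at positions $i_1,\ldots,i_j$); $\mathcal{N}$ is a Nijenhuis operator if $\mathcal{N}\alpha=\alpha\mathcal{N}$ and $[\mathcal{N}x_1,\ldots,\mathcal{N}x_n]=\mathcal{N}([x_1,\ldots,x_n]^{n-1}_{\mathcal{N}})$. An almost product structure is a degree-zero linear map $\mathcal{P}:\mathfrak{g}\to\mathfrak{g}$ with $\mathcal{P}\neq\pm\mathrm{id}_{\mathfrak{g}}$ and $\mathcal{P}^2=\mathrm{id}_{\mathfrak{g}}$; a product structure is an almost product structure which is a Nijenhuis operator. *)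

(* Defs.v *)
From HB Require Import structures.
From mathcomp Require Import all_boot all_order.
From mathcomp Require Import fingroup perm.
From mathcomp Require Import all_algebra.
Set Implicit Arguments. Unset Strict Implicit. Unset Printing Implicit Defensive.
Import Order.TTheory GRing.Theory Num.Theory.
Local Open Scope ring_scope.

Section Defs.
Variables (K : fieldType) (V : lmodType K) (Gam : zmodType).

Definition upd n (x : 'I_n -> V) (k : nat) (v : V) : 'I_n -> V :=
  fun j => if val j == k then v else x j.

Definition subspace (h : pred V) : Prop :=
  0 \in h /\ forall (c : K) u v, u \in h -> v \in h -> c *: u + v \in h.

(* V = (+)_{gamma} G gamma as a Gamma-graded vector space *)
Definition graded_space (G : Gam -> pred V) : Prop :=
  (forall g, subspace (G g)) /\
  (forall x : V, exists s : seq Gam, exists f : Gam -> V,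
      uniq s /\ (forall g, f g \in G g) /\ x = \sum_(g <- s) f g) /\
  (forall (s : seq Gam) (f : Gam -> V), uniq s -> (forall g, f g \in G g) ->
      \sum_(g <- s) f g = 0 -> forall g, g \in s -> f g = 0).

Definition bicharacter (eps : Gam -> Gam -> K) : Prop :=
  (forall a b, eps a b != 0) /\
  (forall a b, eps a b * eps b a = 1) /\
  (forall a b c, eps a (b + c) = eps a b * eps a c) /\
  (forall a b c, eps (a + b) c = eps a c * eps b c).

Definition multilinear n (br : ('I_n -> V) -> V) : Prop :=
  forall (x : 'I_n -> V) (i : 'I_n) (c : K) (u v : V),
    br (upd x i (c *: u + v)) = c *: br (upd x i u) + br (upd x i v).

Definition degree_zero (G : Gam -> pred V) (f : V -> V) : Prop :=
  forall g x, x \in G g -> f x \in G g.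

Definition nHomLieColor (G : Gam -> pred V) n (br : ('I_n -> V) -> V)
    (eps : Gam -> Gam -> K) (alpha : {linear V -> V}) : Prop :=
  [/\ graded_space G /\ bicharacter eps, multilinear br,
      (
      (forall (x : 'I_n -> V) (a : 'I_n -> Gam), (forall j, x j \in G (a j)) ->
         br x \in G (\sum_(j < n) a j)) /\
      degree_zero G alpha) ,
      (forall (x : 'I_n -> V) (a : 'I_n -> Gam), (forall j, x j \in G (a j)) ->
         forall i j : 'I_n, val j = (val i).+1 ->
         br x = - (eps (a i) (a j) *: br (fun k => x (tperm i j k))))
    & (* (ii) Hom-Jacobi (x_1..x_{n-1} are x 0 .. x (n-2); x (n-1) is ignored) *)
      (forall (x y : 'I_n -> V) (a b : 'I_n -> Gam),
         (forall j, x j \in G (a j)) -> (forall j, y j \in G (b j)) ->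
         br (upd (fun j => alpha (x j)) n.-1 (br y)) =
         \sum_(i < n) eps (\sum_(j < n | (val j < n.-1)%N) a j)
                          (\sum_(j < n | (val j < val i)%N) b j) *:
            br (upd (fun j => alpha (y j)) i (br (upd x n.-1 (y i)))))].

Fixpoint nbr n (br : ('I_n -> V) -> V) (N : V -> V) (j : nat) (x : 'I_n -> V) : V :=
  match j with
  | 0 => br x
  | j'.+1 => \sum_(S : {set 'I_n} | #|S| == j'.+1)
                br (fun k => if k \in S then N (x k) else x k)
             - N (nbr br N j' x)
  end.

Definition Nijenhuis n (br : ('I_n -> V) -> V) (alpha N : {linear V -> V}) : Prop :=
  (forall v, N (alpha v) = alpha (N v)) /\
  (forall x : 'I_n -> V, br (fun k => N (x k)) = N (nbr br N n.-1 x)).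

Definition almost_product (G : Gam -> pred V) (P : {linear V -> V}) : Prop :=
  [/\ degree_zero G P, (exists v, P v != v), (exists v, P v != - v)
    & forall v, P (P v) = v].

Definition product_structure (G : Gam -> pred V) n (br : ('I_n -> V) -> V)
    (alpha P : {linear V -> V}) : Prop :=
  almost_product G P /\ Nijenhuis br alpha P.

Definition graded_subalgebra (G : Gam -> pred V) n (br : ('I_n -> V) -> V)
    (alpha : {linear V -> V}) (h : pred V) : Prop :=
  [/\ subspace h,
      (forall x, x \in h -> exists s : seq Gam, exists f : Gam -> V,
          [/\ uniq s, (forall g, f g \in G g /\ f g \in h) & x = \sum_(g <- s) f g]),
      (forall x, x \in h -> alpha x \in h)
    & (forall x : 'I_n -> V, (forall j, x j \in h) -> br x \in h)].

Definition subalg_decomposition (G : Gam -> pred V) n (br : ('I_n -> V) -> V)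
    (alpha : {linear V -> V}) (hp hm : pred V) : Prop :=
  [/\ graded_subalgebra G br alpha hp /\ graded_subalgebra G br alpha hm,
      (exists v, v \in hp /\ v != 0) /\ (exists v, v \in hm /\ v != 0),
      (forall v, v \in hp -> v \in hm -> v = 0),
      (forall x, exists u w, [/\ u \in hp, w \in hm & x = u + w])
    & (forall g x, x \in G g ->
         exists u w, [/\ u \in hp, u \in G g, w \in hm, w \in G g & x = u + w])].

Definition eigen_pos (P : V -> V) : pred V := fun x => P x == x.
Definition eigen_neg (P : V -> V) : pred V := fun x => P x == - x.

End Defs.

(* Main.v *)
Require Import Defs.
From HB Require Import structures.
From mathcomp Require Import all_boot all_order.
From mathcomp Require Import fingroup perm.
From mathcomp Require Import all_algebra.
From Stdlib Require Import FunctionalExtensionality ClassicalEpsilon.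
Import Order.TTheory GRing.Theory Num.Theory.
Local Open Scope ring_scope.
Set Implicit Arguments. Unset Strict Implicit. Unset Printing Implicit Defensive.

Section Core.
Variables (K : fieldType) (V : lmodType K) (n : nat) (br : ('I_n -> V) -> V).
Hypothesis ML : multilinear br.

Lemma upd_fun (x : 'I_n -> V) (i : 'I_n) v :
  upd x i v = fun k => if k == i then v else x k.
Proof. by apply: functional_extensionality => k; rewrite /upd val_eqE. Qed.

Lemma br_add x (i : 'I_n) u v : br (upd x i (u + v)) = br (upd x i u) + br (upd x i v).
Proof. by have := ML x i 1 u v; rewrite !scale1r. Qed.

Lemma br_upd0 x (i : 'I_n) : br (upd x i 0) = 0.
Proof.
have := ML x i 1 0 0; rewrite scale1r addr0 scale1r => H.
by apply: (@addrI _ (br (upd x i 0))); rewrite addr0 -H.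
Qed.

Lemma br_scale x (i : 'I_n) c u : br (upd x i (c *: u)) = c *: br (upd x i u).
Proof. by have := ML x i c u 0; rewrite !addr0 br_upd0 addr0. Qed.

Lemma br_scale_set c : forall m (A : {set 'I_n}) y, #|A| = m ->
  br (fun k => if k \in A then c *: y k else y k) = c ^+ m *: br y.
Proof.
elim=> [|m IH] A y hA.
  have -> : A = set0 by apply/eqP; rewrite -cards_eq0 hA.
  rewrite expr0 scale1r; congr br; apply: functional_extensionality => k.
  by rewrite in_set0.
have /set0Pn [a aA] : A != set0 by rewrite -cards_eq0 hA.
have hA' : #|A :\ a| = m by move: hA; rewrite (cardsD1 a) aA add1n => [[]].
have -> : (fun k => if k \in A then c *: y k else y k) =
   upd (fun k => if k \in A :\ a then c *: y k else y k) a (c *: y a).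
  rewrite upd_fun; apply: functional_extensionality => k; rewrite in_setD1.
  by case: eqP => [->|_] /=; rewrite ?aA.
rewrite br_scale.
have -> : upd (fun k => if k \in A :\ a then c *: y k else y k) a (y a) =
   (fun k => if k \in A :\ a then c *: y k else y k).
  rewrite upd_fun; apply: functional_extensionality => k.
  by case: eqP => [->|//]; rewrite setD11.
by rewrite IH // exprS scalerA.
Qed.

Lemma D1_eq (a : 'I_n) (S : {set 'I_n}) : (S :\ a == S) = (a \notin S).
Proof.
apply/eqP/idP => [<-|aS]; first by rewrite setD11.
apply/setP => k; rewrite !inE; case: eqP => // ->; by rewrite (negbTE aS).
Qed.

Lemma br_expand : forall m (A : {set 'I_n}) y z, #|A| = m ->
  br (fun k => if k \in A then y k + z k else y k) =
  \sum_(S : {set 'I_n} | S \subset A) br (fun k => if k \in S then z k else y k).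
Proof.
elim=> [|m IH] A y z hA.
  have -> : A = set0 by apply/eqP; rewrite -cards_eq0 hA.
  rewrite (big_pred1 set0); last by move=> S; rewrite /= subset0.
  by congr br; apply: functional_extensionality => k; rewrite in_set0.
have /set0Pn [a aA] : A != set0 by rewrite -cards_eq0 hA.
have hA' : #|A :\ a| = m by move: hA; rewrite (cardsD1 a) aA add1n => [[]].
set W := fun k => if k \in A :\ a then y k + z k else y k.
have -> : (fun k => if k \in A then y k + z k else y k) = upd W a (y a + z a).
  rewrite upd_fun; apply: functional_extensionality => k; rewrite /W in_setD1.
  by case: eqP => [->|_] /=; rewrite ?aA.
rewrite br_add.
have -> : upd W a (y a) = W.
  rewrite upd_fun; apply: functional_extensionality => k.
  by case: eqP => [->|//]; rewrite /W setD11.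
have -> : upd W a (z a) = fun k => if k \in A :\ a then upd y a (z a) k + z k
                                   else upd y a (z a) k.
  rewrite !upd_fun; apply: functional_extensionality => k.
  by case: eqP => [->|//]; rewrite /W setD11.
rewrite /W !IH //.
symmetry; rewrite [LHS](bigID (fun S : {set 'I_n} => a \in S)) /= addrC; congr (_ + _).
  by apply: eq_bigl => S; rewrite subsetD1.
rewrite (reindex_onto (fun S => a |: S) (fun S => S :\ a)) /=; last first.
  by move=> S /andP[_ aS]; rewrite setD1K.
apply: eq_big => S.
  have e1 : (a |: S) :\ a = S :\ a by apply/setP => k; rewrite !inE; case: (k == a).
  rewrite subsetD1 e1 D1_eq setU11 andbT subUset sub1set aA /=.
  done.
move=> /andP[/andP [_ _] ] ; rewrite (_ : (a |: S) :\ a = S :\ a); last first.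
  by apply/setP => k; rewrite !inE; case: (k == a).
rewrite D1_eq => aS.
congr br; apply: functional_extensionality => k; rewrite in_setU1 upd_fun.
by case: eqP => [->|_] //=; rewrite (negbTE aS).
Qed.


Definition T (N : V -> V) (x : 'I_n -> V) (i : nat) :=
  \sum_(S : {set 'I_n} | #|S| == i) br (fun k => if k \in S then N (x k) else x k).

Lemma expand_c (N : V -> V) c x :
  br (fun k => x k + c *: N (x k)) = \sum_(i < n.+1) c ^+ i *: T N x i.
Proof.
have := br_expand (A := [set: 'I_n]) x (fun k => c *: N (x k)) erefl.
have -> : (fun k => if k \in [set: 'I_n] then x k + c *: N (x k) else x k) =
          (fun k => x k + c *: N (x k)).
  by apply: functional_extensionality => k; rewrite in_setT.
move=> ->.
transitivity (\sum_(S : {set 'I_n}) c ^+ #|S| *: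
                 br (fun k => if k \in S then N (x k) else x k)).
  apply: eq_big => S; first by rewrite subsetT.
  move=> _; rewrite -(br_scale_set c (A := S)
                (fun k => if k \in S then N (x k) else x k) erefl).
  by congr br; apply: functional_extensionality => k; case: (k \in S).
rewrite /T; under [RHS]eq_bigr do rewrite scaler_sumr.
rewrite (exchange_big_dep xpredT) //=.
apply: eq_bigr => S _.
rewrite (big_pred1 (inord #|S|)) ?inordK // ?ltnS ?max_card //.
  by rewrite -[X in (_ <= X)%N](card_ord n) max_card.
move=> i /=; rewrite -val_eqE /= inordK; first by rewrite eq_sym.
by rewrite ltnS -[X in (_ <= X)%N](card_ord n) max_card.
Qed.

Lemma T0 N x : T N x 0 = br x.
Proof.
rewrite /T (big_pred1 set0); last by move=> S; rewrite /= cards_eq0.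
by congr br; apply: functional_extensionality => k; rewrite in_set0.
Qed.

Lemma Tn N x : T N x n = br (fun k => N (x k)).
Proof.
rewrite /T (big_pred1 setT); last first.
  move=> S /=; apply/eqP/eqP => [h|->]; last by rewrite cardsT card_ord.
  by apply/eqP; rewrite eqEcard subsetT cardsT card_ord h /=.
by congr br; apply: functional_extensionality => k; rewrite in_setT.
Qed.

Definition sgT (N : V -> V) (j i : nat) (v : V) :=
  (-1) ^+ (j - i) *: (if odd (j - i) then N v else v).

Lemma nbr_formula (N : {linear V -> V}) (NN : forall v, N (N v) = v) x j :
  nbr br N j x = \sum_(i < j.+1) sgT N j i (T N x i).
Proof.
elim: j => [|j IH] /=.
  by rewrite big_ord1 /sgT subnn expr0 scale1r /= T0.
rewrite IH [RHS]big_ord_recr /= /sgT subnn expr0 scale1r /= [RHS]addrC; congr (_ + _).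
rewrite linear_sum -sumrN; apply: eq_bigr => i _.
have hi : (i <= j)%N by rewrite -ltnS.
rewrite subSn // linearZ /= exprS mulN1r scaleNr.
by case: (odd (j - i)) => /=; rewrite ?NN.
Qed.

Lemma main_id (N : {linear V -> V}) (NN : forall v, N (N v) = v) x :
  (0 < n)%N ->
  2%:R *: (br (fun k => N (x k)) - N (nbr br N n.-1 x)) =
  (br (fun k => x k + N (x k)) - N (br (fun k => x k + N (x k)))) +
  (-1) ^+ n *: (br (fun k => x k - N (x k)) + N (br (fun k => x k - N (x k)))).
Proof.
move=> n0.
have eY : br (fun k => x k + N (x k)) = \sum_(i < n.+1) T N x i.
  transitivity (br (fun k => x k + 1 *: N (x k))).
    by congr br; apply: functional_extensionality => k; rewrite scale1r.
  by rewrite expand_c; apply: eq_bigr => i _; rewrite expr1n scale1r.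
have eZ : br (fun k => x k - N (x k)) = \sum_(i < n.+1) (-1) ^+ i *: T N x i.
  transitivity (br (fun k => x k + (-1) *: N (x k))).
    by congr br; apply: functional_extensionality => k; rewrite scaleN1r.
  by rewrite expand_c.
have H := nbr_formula NN x (n.-1).+1.
rewrite /= (prednK n0) in H.
have -> : br (fun k => N (x k)) - N (nbr br N n.-1 x) =
   \sum_(i < n.+1) sgT N n i (T N x i) by rewrite -Tn; exact: H.
rewrite eY eZ !linear_sum /= -!big_split /= scaler_sumr -big_split /=.
apply: eq_bigr => i _.
have hi : (i <= n)%N by rewrite -ltnS.
have ee : (-1) ^+ i * (-1) ^+ i = 1 :> K.
  by rewrite -exprD -signr_odd oddD addbb expr0.
have en : (-1) ^+ n = (-1) ^+ (n - i) * (-1) ^+ i :> K by rewrite -exprD subnK.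
rewrite [N (_ *: _)]linearZ /= -scalerDr !scalerA en -mulrA ee mulr1.
rewrite /sgT -(signr_odd _ (n - i)%N); case: (odd (n - i)) => /=.
  rewrite expr1 mulrN1 !scaleNr scale1r scaler_nat mulr2n !opprD addrACA subrr add0r //.
rewrite expr0 mulr1 scale1r scaler_nat mulr2n addrACA addNr addr0 //.
Qed.

End Core.

Section Sub.
Variables (K : fieldType) (V : lmodType K) (h : pred V).
Hypothesis hs : subspace h.
Lemma sub0 : 0 \in h. Proof. by case: hs. Qed.
Lemma subD u v : u \in h -> v \in h -> u + v \in h.
Proof. by move=> hu hv; have := hs.2 1 u v hu hv; rewrite scale1r. Qed.
Lemma subZ c u : u \in h -> c *: u \in h.
Proof. by move=> hu; have := hs.2 c u 0 hu sub0; rewrite addr0. Qed.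
Lemma subN u : u \in h -> - u \in h.
Proof. by move=> hu; rewrite -scaleN1r subZ. Qed.
Lemma subB u v : u \in h -> v \in h -> u - v \in h.
Proof. by move=> hu hv; rewrite subD // subN. Qed.
End Sub.

Section Char0.
Variables (K : fieldType) (charK0 : [pchar K] =i pred0) (V : lmodType K).
Lemma natf_neq0 m : (m.+1)%:R != 0 :> K.
Proof. by rewrite ((pcharf0P K).1 charK0). Qed.
Lemma two_neq0 : 2%:R != 0 :> K. Proof. exact: natf_neq0. Qed.
Lemma two_exp_neq0 m : 2%:R ^+ m != 0 :> K.
Proof. by rewrite expf_neq0 // two_neq0. Qed.
Lemma scale_inj (c : K) (v : V) : c != 0 -> c *: v = 0 -> v = 0.
Proof. by move=> c0 /eqP; rewrite scaler_eq0 (negbTE c0) => /eqP. Qed.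
End Char0.

Section Dir1.
Variables (K : fieldType) (charK0 : [pchar K] =i pred0)
    (V : lmodType K) (Gam : zmodType) (G : Gam -> pred V) (n : nat) (n0 : (0 < n)%N)
    (br : ('I_n -> V) -> V) (alpha : {linear V -> V}).
Hypothesis GS : graded_space G.
Hypothesis ML : multilinear br.
Variable P : {linear V -> V}.
Hypothesis hP : product_structure G br alpha P.

Let PP : forall v, P (P v) = v. Proof. by case: hP => [[]]. Qed.
Let Pdeg : degree_zero G P. Proof. by case: hP => [[]]. Qed.
Let Palpha : forall v, P (alpha v) = alpha (P v). Proof. by case: hP => _ []. Qed.
Let PN : forall x : 'I_n -> V, br (fun k => P (x k)) = P (nbr br P n.-1 x).
Proof. by case: hP => _ []. Qed.

Let hf : K := (2%:R)^-1.
Let hf2 : hf * 2%:R = 1. Proof. by rewrite mulVf // two_neq0. Qed.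

Lemma br_all_scale c (x : 'I_n -> V) : br (fun k => c *: x k) = c ^+ n *: br x.
Proof.
have hc : #|[set: 'I_n]| = n by rewrite cardsT card_ord.
rewrite -(br_scale_set ML c (A := [set: 'I_n]) x hc).
by congr br; apply: functional_extensionality => k; rewrite in_setT.
Qed.

Lemma key_eq (x : 'I_n -> V) :
  (br (fun k => x k + P (x k)) - P (br (fun k => x k + P (x k)))) +
  (-1) ^+ n *: (br (fun k => x k - P (x k)) + P (br (fun k => x k - P (x k)))) = 0.
Proof. by rewrite -(main_id ML PP x n0) PN subrr scaler0. Qed.

Lemma pos_br (x : 'I_n -> V) : (forall k, P (x k) = x k) -> P (br x) = br x.
Proof.
move=> hx; have := key_eq x.
have -> : (fun k => x k + P (x k)) = (fun k => 2%:R *: x k).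
  by apply: functional_extensionality => k; rewrite hx scaler_nat mulr2n.
have -> : (fun k => x k - P (x k)) = (fun k => 0 *: x k).
  by apply: functional_extensionality => k; rewrite hx subrr scale0r.
rewrite !br_all_scale expr0n eqn0Ngt n0 /= scale0r linear0 addr0 scaler0 addr0.
rewrite linearZ /= -scalerBr => /(scale_inj (two_exp_neq0 charK0 n)) /eqP.
by rewrite subr_eq0 => /eqP.
Qed.

Lemma neg_br (x : 'I_n -> V) : (forall k, P (x k) = - x k) -> P (br x) = - br x.
Proof.
move=> hx; have := key_eq x.
have -> : (fun k => x k - P (x k)) = (fun k => 2%:R *: x k).
  by apply: functional_extensionality => k; rewrite hx opprK scaler_nat mulr2n.
have -> : (fun k => x k + P (x k)) = (fun k => 0 *: x k).
  by apply: functional_extensionality => k; rewrite hx subrr scale0r.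
rewrite !br_all_scale expr0n eqn0Ngt n0 /= scale0r linear0 subr0 add0r.
rewrite linearZ /= -scalerDr scalerA => H.
have hne : (-1) ^+ n * 2%:R ^+ n != 0 :> K.
  by rewrite mulf_neq0 ?signr_eq0 ?two_exp_neq0.
have /eqP := scale_inj hne H.
by rewrite addrC addr_eq0 => /eqP.
Qed.

Lemma eigen_decomp : subalg_decomposition G br alpha (eigen_pos P) (eigen_neg P).
Proof.
have memp v : (v \in eigen_pos P) = (P v == v) by [].
have memn v : (v \in eigen_neg P) = (P v == - v) by [].
have hf0 : hf != 0 by rewrite invr_neq0 // two_neq0.
have sp : subspace (eigen_pos P).
  split; first by rewrite memp linear0.
  by move=> c u v; rewrite !memp => /eqP hu /eqP hv; rewrite linearP hu hv.
have sn : subspace (eigen_neg P).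
  split; first by rewrite memn linear0 oppr0.
  by move=> c u v; rewrite !memn => /eqP hu /eqP hv; rewrite linearP hu hv scalerN opprD.
pose pp v := hf *: (v + P v).
pose pn v := hf *: (v - P v).
have ppin v : pp v \in eigen_pos P by rewrite memp linearZ linearD /= PP addrC.
have pnin v : pn v \in eigen_neg P.
  by rewrite memn linearZ linearB /= PP -scalerN opprB.
have ppn v : pp v + pn v = v.
  by rewrite -scalerDr addrACA subrr addr0 -mulr2n -scaler_nat scalerA hf2 scale1r.
have ppfix v : v \in eigen_pos P -> pp v = v.
  by rewrite memp => /eqP hv; rewrite /pp hv -mulr2n -scaler_nat scalerA hf2 scale1r.
have pnfix v : v \in eigen_neg P -> pn v = v.
  by rewrite memn => /eqP hv; rewrite /pn hv opprK -mulr2n -scaler_nat scalerA hf2 scale1r.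
have ppG g v : v \in G g -> pp v \in G g.
  move=> hv; rewrite /pp; apply: (subZ (GS.1 g)). have := subD (GS.1 g) hv (Pdeg hv). done.
have pnG g v : v \in G g -> pn v \in G g.
  by move=> hv; apply: (subZ (GS.1 g)); apply: (subB (GS.1 g)) hv (Pdeg hv).
have pp_sum (s : seq Gam) f : pp (\sum_(g <- s) f g) = \sum_(g <- s) pp (f g).
  by rewrite /pp linear_sum -big_split scaler_sumr.
have pn_sum (s : seq Gam) f : pn (\sum_(g <- s) f g) = \sum_(g <- s) pn (f g).
  by rewrite /pn linear_sum -sumrB scaler_sumr.
split.
- split.
  + split => //.
    * move=> x hx; have [s [f [us [fG xe]]]] := GS.2.1 x.
      exists s, (fun g => pp (f g)); split => //.
        by move=> g; split; [exact: ppG | exact: ppin].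
      by rewrite -pp_sum -xe ppfix.
    * by move=> x; rewrite !memp => /eqP hx; rewrite Palpha hx.
    * move=> x hx; rewrite memp; apply/eqP; apply: pos_br => k.
      by apply/eqP; rewrite -memp.
  + split => //.
    * move=> x hx; have [s [f [us [fG xe]]]] := GS.2.1 x.
      exists s, (fun g => pn (f g)); split => //.
        by move=> g; split; [exact: pnG | exact: pnin].
      by rewrite -pn_sum -xe pnfix.
    * by move=> x; rewrite !memn => /eqP hx; rewrite Palpha hx linearN.
    * move=> x hx; rewrite memn; apply/eqP; apply: neg_br => k.
      by apply/eqP; rewrite -memn.
- case: hP => [[_ [v1 hv1] [v2 hv2] _] _]; split.
  + exists (pp v2); split => //; apply/eqP => /(scale_inj hf0) /eqP.
    by rewrite addrC addr_eq0 (negbTE hv2).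
  + exists (pn v1); split => //; apply/eqP => /(scale_inj hf0) /eqP.
    by rewrite subr_eq0 eq_sym (negbTE hv1).
- move=> v; rewrite memp memn => /eqP e1 /eqP e2.
  apply: (scale_inj (two_neq0 charK0)).
  by rewrite scaler_nat mulr2n -{1}e1 e2 addNr.
- by move=> x; exists (pp x), (pn x); split.
- by move=> g x hx; exists (pp x), (pn x); split; rewrite ?ppG ?pnG.
Qed.

End Dir1.

Section Dir2.
Variables (K : fieldType) (charK0 : [pchar K] =i pred0)
    (V : lmodType K) (Gam : zmodType) (G : Gam -> pred V) (n : nat) (n0 : (0 < n)%N)
    (br : ('I_n -> V) -> V) (alpha : {linear V -> V}).
Hypothesis GS : graded_space G.
Hypothesis ML : multilinear br.
Variables hp hm : pred V.
Hypothesis sp : subspace hp.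
Hypothesis sm : subspace hm.
Hypothesis ap : forall x, x \in hp -> alpha x \in hp.
Hypothesis am : forall x, x \in hm -> alpha x \in hm.
Hypothesis bp : forall x : 'I_n -> V, (forall j, x j \in hp) -> br x \in hp.
Hypothesis bm : forall x : 'I_n -> V, (forall j, x j \in hm) -> br x \in hm.
Hypothesis nzp : exists v, v \in hp /\ v != 0.
Hypothesis nzm : exists v, v \in hm /\ v != 0.
Hypothesis hint : forall v, v \in hp -> v \in hm -> v = 0.
Hypothesis hdec : forall x, exists u w, [/\ u \in hp, w \in hm & x = u + w].
Hypothesis hgdec : forall g x, x \in G g ->
         exists u w, [/\ u \in hp, u \in G g, w \in hm, w \in G g & x = u + w].

Lemma hdec' x : exists u, u \in hp /\ x - u \in hm.
Proof. by have [u [w [hu hw xe]]] := hdec x; exists u; rewrite xe (addrC u w) addrK. Qed.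

Definition projp x : V := proj1_sig (constructive_indefinite_description _ (hdec' x)).
Lemma projp_spec x : projp x \in hp /\ x - projp x \in hm.
Proof. exact: (proj2_sig (constructive_indefinite_description _ (hdec' x))). Qed.

Lemma projp_uniq x u : u \in hp -> x - u \in hm -> projp x = u.
Proof.
move=> hu hxu; have [h1 h2] := projp_spec x.
apply/eqP; rewrite -subr_eq0; apply/eqP; apply: hint; first exact: (subB sp h1 hu).
have := subB sm hxu h2; by rewrite opprB addrC addrA subrK.
Qed.

Definition Pf x := 2%:R *: projp x - x.

Lemma Pf_lin : GRing.linear_for *:%R Pf.
Proof.
move=> a u v; have [h1u h2u] := projp_spec u; have [h1v h2v] := projp_spec v.
rewrite /Pf (@projp_uniq _ (a *: projp u + projp v)).
- rewrite scalerDr scalerBr !scalerA (mulrC a) opprD addrACA.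
  by [].
- exact: (subD sp (subZ sp a h1u) h1v).
- rewrite opprD addrACA -scalerBr; exact: (subD sm (subZ sm a h2u) h2v).
Qed.

HB.instance Definition _ := GRing.isLinear.Build K V V *:%R Pf Pf_lin.
Definition PL : {linear V -> V} := Pf.

Lemma PL_dec u w : u \in hp -> w \in hm -> PL (u + w) = u - w.
Proof.
move=> hu hw; rewrite /= /Pf (@projp_uniq _ u) //; last by rewrite (addrC u w) addrK.
by rewrite scaler_nat mulr2n opprD addrA addrK.
Qed.

Lemma PL_pos u : u \in hp -> PL u = u.
Proof. by move=> hu; have := PL_dec hu (sub0 sm); rewrite addr0 subr0. Qed.

Lemma PL_neg w : w \in hm -> PL w = - w.
Proof. by move=> hw; have := PL_dec (sub0 sp) hw; rewrite add0r sub0r. Qed.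

Lemma PL_x x : PL x = projp x - (x - projp x).
Proof.
have [h1 h2] := projp_spec x.
transitivity (PL (projp x + (x - projp x))); first by rewrite addrC subrK.
by rewrite PL_dec.
Qed.

Lemma PL_invol x : PL (PL x) = x.
Proof.
have [h1 h2] := projp_spec x.
rewrite (PL_x x) PL_dec; [by rewrite opprK addrC subrK | done | exact: (subN sm h2)].
Qed.

Lemma PL_plus x : x + PL x \in hp.
Proof.
have [h1 h2] := projp_spec x.
rewrite /= /Pf addrC subrK; exact: (subZ sp _ h1).
Qed.

Lemma PL_minus x : x - PL x \in hm.
Proof.
have [h1 h2] := projp_spec x.
have -> : x - PL x = 2%:R *: (x - projp x).
  by rewrite /= /Pf opprB scalerBr [2%:R *: x]scaler_nat mulr2n addrA.
exact: (subZ sm _ h2).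
Qed.

Lemma PL_product : product_structure G br alpha PL.
Proof.
split; first split.
- move=> g x hx; have [u [w [hu hug hw hwg ->]]] := hgdec hx.
  by rewrite PL_dec //; exact: (subB (GS.1 g) hug hwg).
- case: nzm => v [hv v0]; exists v; rewrite PL_neg //; apply/eqP => e.
  have : 2%:R *: v = 0 by rewrite scaler_nat mulr2n -{1}e addNr.
  by move/(scale_inj (two_neq0 charK0))/eqP; rewrite (negbTE v0).
- case: nzp => v [hv v0]; exists v; rewrite PL_pos //; apply/eqP => e.
  have : 2%:R *: v = 0 by rewrite scaler_nat mulr2n {2}e subrr.
  by move/(scale_inj (two_neq0 charK0))/eqP; rewrite (negbTE v0).
- exact: PL_invol.
split.
- move=> v; have [h1 h2] := projp_spec v.
  have ev : v = projp v + (v - projp v) by rewrite addrC subrK.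
  rewrite [in LHS]ev linearD /= PL_dec; [|exact: ap h1|exact: am h2].
  by rewrite -[Pf v]/(PL v) (PL_x v) [RHS]linearB.
- move=> x; have := main_id ML PL_invol x n0.
  rewrite [PL (br (fun k => x k + _))]PL_pos; last by apply: bp => j; exact: PL_plus.
  rewrite [PL (br (fun k => x k - _))]PL_neg; last by apply: bm => j; exact: PL_minus.
  rewrite !subrr scaler0 addr0 => /(scale_inj (two_neq0 charK0)).
  by move/eqP; rewrite subr_eq0 => /eqP.
Qed.

End Dir2.

Unset Implicit Arguments.
Set Strict Implicit.

Theorem theorem6p8 (K : fieldType) (charK0 : [pchar K] =i pred0)
    (V : lmodType K) (Gam : zmodType) (G : Gam -> pred V) (n : nat) (hn : (2 <= n)%N)
    (br : ('I_n -> V) -> V) (eps : Gam -> Gam -> K) (alpha : {linear V -> V})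
    (halg : nHomLieColor G br eps alpha) :
  ((exists P : {linear V -> V}, product_structure G br alpha P) <->
   (exists hp hm : pred V, subalg_decomposition G br alpha hp hm)) /\
  (forall P : {linear V -> V}, product_structure G br alpha P ->
     subalg_decomposition G br alpha (eigen_pos P) (eigen_neg P)).
Proof.
case: halg => [[GS _] ML _ _ _].
have n0 : (0 < n)%N by apply: leq_trans hn.
have E := fun P (hP : product_structure G br alpha P) =>
  eigen_decomp charK0 n0 GS ML hP.
split; last exact: E.
split.
  by case=> P hP; exists (eigen_pos P), (eigen_neg P); exact: E.
case=> hp [hm [[[sp _ ap bp] [sm _ am bm]] [nzp nzm] hint hdec hgdec]].
exists (PL sp sm hint hdec).
exact: (PL_product charK0 n0 GS ML sp sm ap am bp bm nzp nzm hint hdec hgdec).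
Qed.
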